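(* Suppose $\mathds{G}$ is an element-based (respectively set-based) generator that generates in the limit from every countable collection under enumerations without noise or omissions. Let $\mathcal{L}$ be a countable collection and let $\tilde{\mathcal{L}}=\{L\cup A\setminus B: L\in\mathcal{L},\ A\subseteq U\setminus L,\ B\subseteq L,\ |A|<\infty,\ |B|<\infty\}$. Suppose $x_{1:\infty}$ is an enumeration of some target language $K\in\mathcal{L}$ with finite noise and finite omissions. Then $\mathds{G}$ applied to the collection $\tilde{\mathcal{L}}$ generates from $K$ in the limit under the enumeration $x_{1:\infty}$.
   Context: The universe $U=\mathbb{N}$ is countable; a language is an infinite subset of $U$; a collection is a countable family of languages (note $\tilde{\mathcal{L}}$ is countable). An enumeration of $L$ without noise or omissions lists every element of $L$ exactly once and nothing else. An enumeration of $K$ with finite noise and finite omissions is a sequence of distinct elements listing every element of some $\hat K\subseteq K$ with $|K\setminus\hat K|<\infty$ together with only finitely many elements outside $\hat K$. An element-based generator outputs at step $n$ an element $w_n\notin\{x_1,\dots,x_n,w_1,\dots,w_{n-1}\}$; a set-based generator outputs $A_n\subseteq U\setminus\{x_1,\dots,x_n\}$. Generating in the limit from a language $T$ means $w_n\in T$ (resp. $A_n\subseteq T$) for all sufficiently large $n$; generating in the limit from a collection under a class of enumerations means doing so for every member $T$ of the collection and every enumeration of $T$ in the class. *)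

(* Defs.v *)
(* Universe U = nat; sets/languages are predicates nat -> Prop. *)
From Stdlib Require Import List Arith.
Import ListNotations.

Definition lang := nat -> Prop.

(* A countable collection: a nat-indexed family of languages. *)
Definition coll := nat -> lang.

Definition infinite_set (S : lang) : Prop := forall m, exists n, m <= n /\ S n.
Definition finite_set (S : lang) : Prop := exists l : list nat, forall w, S w -> In w l.

(* Every member of the collection is a language (an infinite subset of U). *)
Definition is_collection (C : coll) : Prop := forall i, infinite_set (C i).

(* Input streams are x : nat -> nat, with x 0 = x_1, x 1 = x_2, ...
   prefix x n = [x_1; ...; x_n]. *)
Definition prefix (x : nat -> nat) (n : nat) : list nat := map x (seq 0 n).

Definition enum_exact (x : nat -> nat) (L : lang) : Prop :=
  (forall m n, x m = x n -> m = n) /\ (forall w, L w <-> exists n, x n = w).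

Definition enum_noisy (x : nat -> nat) (K : lang) : Prop :=
  (forall m n, x m = x n -> m = n) /\
  exists Khat : lang,
    (forall w, Khat w -> K w) /\
    finite_set (fun w => K w /\ ~ Khat w) /\
    (forall w, Khat w -> exists n, x n = w) /\
    finite_set (fun w => (exists n, x n = w) /\ ~ Khat w).

Definition is_tilde (C Ct : coll) : Prop :=
  (forall j, exists i (A B : lang),
      (forall w, A w -> ~ C i w) /\ (forall w, B w -> C i w) /\
      finite_set A /\ finite_set B /\
      (forall w, Ct j w <-> ((C i w \/ A w) /\ ~ B w))) /\
  (forall i (A B : lang),
      (forall w, A w -> ~ C i w) -> (forall w, B w -> C i w) ->
      finite_set A -> finite_set B ->
      exists j, forall w, Ct j w <-> ((C i w \/ A w) /\ ~ B w)).

(* Element-based generator: given the collection and x_1..x_n, outputs w_n. *)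
Definition egen := coll -> list nat -> nat.

Definition egen_valid (G : egen) : Prop :=
  forall (C : coll) (x : nat -> nat) (n : nat), 1 <= n ->
    ~ In (G C (prefix x n)) (prefix x n) /\
    (forall k, 1 <= k < n -> G C (prefix x n) <> G C (prefix x k)).

Definition egenerates (G : egen) (C : coll) (x : nat -> nat) (T : lang) : Prop :=
  exists N, forall n, N <= n -> 1 <= n -> T (G C (prefix x n)).

(* Set-based generator: outputs A_n ⊆ U \ {x_1..x_n}. *)
Definition sgen := coll -> list nat -> lang.

Definition sgen_valid (G : sgen) : Prop :=
  forall (C : coll) (x : nat -> nat) (n : nat) (w : nat), 1 <= n ->
    G C (prefix x n) w -> ~ In w (prefix x n).

Definition sgenerates (G : sgen) (C : coll) (x : nat -> nat) (T : lang) : Prop :=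
  exists N, forall n, N <= n -> 1 <= n -> forall w, G C (prefix x n) w -> T w.

(* Main.v *)
Require Import Defs.
From Stdlib Require Import List Arith Lia Classical.
Import ListNotations.

Lemma in_prefix x n w : (exists k, k < n /\ x k = w) -> In w (prefix x n).
Proof.
  intros [k [Hk Hw]]. unfold prefix. apply in_map_iff. exists k. split; auto.
  apply in_seq. lia.
Qed.

Lemma list_bound (l : list nat) : exists M, forall w, In w l -> w < M.
Proof.
  induction l as [|a l [M HM]]. exists 0; intros w [].
  exists (S (max a M)). intros w [<-|H]. lia. specialize (HM w H). lia.
Qed.

Lemma appear_all (x : nat -> nat) (A : lang) (l : list nat) :
  (forall w, In w l -> A w -> exists k, x k = w) ->
  exists N, forall w, In w l -> A w -> forall n, N <= n -> In w (prefix x n).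
Proof.
  induction l as [|a l IH]; intros H.
  - exists 0. intros w [].
  - destruct IH as [N HN]. { intros w Hw HA. apply H; simpl; auto. }
    destruct (classic (A a)) as [Ha|Ha].
    + destruct (H a (or_introl eq_refl) Ha) as [k Hk].
      exists (max N (S k)). intros w [<-|Hw] HA n Hn.
      * apply in_prefix. exists k. split; auto. lia.
      * apply HN; auto. lia.
    + exists N. intros w [<-|Hw] HA n Hn. contradiction. apply HN; auto.
Qed.

Lemma key (C Ct : coll) (i : nat) (x : nat -> nat) :
  is_collection C -> is_tilde C Ct -> enum_noisy x (C i) ->
  is_collection Ct /\ exists j, enum_exact x (Ct j) /\
    exists N, forall n, N <= n -> forall w, Ct j w -> ~ In w (prefix x n) -> C i w.
Proof.
  intros HC [Ht1 Ht2] [Hinj [Kh [HKh1 [HKh2 [HKh3 HKh4]]]]].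
  split.
  - intros j. destruct (Ht1 j) as [i' [A [B [HA [HB [_ [[lB HlB] Hj]]]]]]].
    intros m. destruct (list_bound lB) as [M HM].
    destruct (HC i' (max m M)) as [n [Hn Hc]]. exists n. split. lia.
    apply Hj. split. auto. intros HBn. specialize (HM n (HlB n HBn)). lia.
  - set (A := fun w => (exists n, x n = w) /\ ~ C i w).
    set (B := fun w => C i w /\ ~ (exists n, x n = w)).
    destruct (Ht2 i A B) as [j Hj].
    + intros w [_ H]; auto.
    + intros w [H _]; auto.
    + destruct HKh4 as [l Hl]. exists l. intros w [H1 H2]. apply Hl.
      split; auto.
    + destruct HKh2 as [l Hl]. exists l. intros w [H1 H2]. apply Hl.
      split; auto.
    + exists j. split.
      * split; auto. intros w. rewrite Hj. unfold A, B. split.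
        -- intros [[H|H] H2]. apply NNPP. intros H3. apply H2; auto. apply H.
        -- intros H. split. destruct (classic (C i w)); auto.
           intros [_ H2]; auto.
      * destruct HKh4 as [l Hl].
        destruct (appear_all x A l) as [N HN].
        { intros w _ [H _]; auto. }
        exists N. intros n Hn w Hw Hnin. apply Hj in Hw.
        destruct Hw as [[H|H] _]; auto.
        exfalso. apply Hnin. apply (HN w); auto.
        apply Hl. destruct H as [H1 H2]. split; auto.
Qed.

Theorem lemma4p3 :
  (forall G : egen, egen_valid G ->
     (forall C : coll, is_collection C ->
        forall i x, enum_exact x (C i) -> egenerates G C x (C i)) ->
     forall (C Ct : coll) (i : nat) (x : nat -> nat),
       is_collection C -> is_tilde C Ct -> enum_noisy x (C i) ->
       egenerates G Ct x (C i))
  /\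
  (forall G : sgen, sgen_valid G ->
     (forall C : coll, is_collection C ->
        forall i x, enum_exact x (C i) -> sgenerates G C x (C i)) ->
     forall (C Ct : coll) (i : nat) (x : nat -> nat),
       is_collection C -> is_tilde C Ct -> enum_noisy x (C i) ->
       sgenerates G Ct x (C i)).
Proof.
  split.
  - intros G HG Hgen C Ct i x HC Ht Hn.
    destruct (key C Ct i x HC Ht Hn) as [HCt [j [Hex [N HN]]]].
    destruct (Hgen Ct HCt j x Hex) as [N1 HN1].
    exists (max N N1). intros n Hn1 Hn2.
    apply (HN n). lia. apply HN1; auto. lia.
    apply (HG Ct x n Hn2).
  - intros G HG Hgen C Ct i x HC Ht Hn.
    destruct (key C Ct i x HC Ht Hn) as [HCt [j [Hex [N HN]]]].
    destruct (Hgen Ct HCt j x Hex) as [N1 HN1].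
    exists (max N N1). intros n Hn1 Hn2 w Hw.
    apply (HN n). lia. apply (HN1 n); auto. lia.
    apply (HG Ct x n w Hn2 Hw).
Qed.
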